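(* Let $\mathbf A$ be an integral interior $r\ell uz$-groupoid and $\mathbf B$ a finite partial subalgebra of $\mathbf A$. Then $\mathbf F^+_{\mathbf A,\mathbf B^0}$ is finite. Moreover, if $\mathbf A$ is zero-bounded (i.e. $0\le x$ for all $x\in A$), then so is $\mathbf F^+_{\mathbf A,\mathbf B^0}$ (its constant $0$ is its least element).
   Context: An $r\ell uz$-groupoid is an algebra $(A,\wedge,\vee,\cdot,\backslash,/,1,0)$ with $(A,\wedge,\vee)$ a lattice (order $\le$), $(A,\cdot,1)$ a unital groupoid (binary operation, not necessarily associative, with two-sided unit $1$), $0\in A$ arbitrary, and $x\cdot y\le z\iff y\le x\backslash z\iff x\le z/y$. An interior one has in addition a unary $!$ with $1\le !1$, $!x\cdot!y\le !(x\cdot y)$, $!x\le x$, $!x\le !!x$, $x\le y\Rightarrow !x\le !y$; integral means $x\le 1$ for all $x$. A partial subalgebra $\mathbf B$ of $\mathbf A$ is a subset $B\subseteq A$ with $f^{\mathbf B}(\vec b)=f^{\mathbf A}(\vec b)$ if this lies in $B$, undefined otherwise. $\mathbf B^0$ denotes the partial subalgebra of $\mathbf A$ with universe $B\cup\{0^{\mathbf A}\}$. An enriched $ruz$-frame is $\mathbf F=(G,T,N,K,\epsilon)$ where $(G,\cdot,\varepsilon)$ is a unital groupoid, $T$ a set, $N\subseteq G\times T$ a nuclear relation (for all $x,y\in G$, $z\in T$ there exist $x\backslash\!\!\backslash z,\ z/\!\!/y\in T$ with $x\cdot y\,N\,z\iff y\,N\,x\backslash\!\!\backslash z\iff x\,N\,z/\!\!/y$),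 $K$ a sub-unital-groupoid of $G$, and $\epsilon\in T$. For $X\subseteq G$, $Y\subseteq T$: $X^{\rhd}=\{t\in T\mid \forall x\in X\,(xNt)\}$, $Y^{\lhd}=\{g\in G\mid\forall y\in Y\,(gNy)\}$, $\gamma_N(X)=X^{\rhd\lhd}$; $X$ closed if $\gamma_N(X)=X$. $\mathbf F^+$ has universe the closed sets, with $X\wedge Y=X\cap Y$, $X\vee Y=\gamma_N(X\cup Y)$, $X\cdot Y=\gamma_N(X\circ Y)$ where $X\circ Y=\{x\cdot y\}$, $X\backslash Y=\{z\mid X\circ\{z\}\subseteq Y\}$, $Y/X=\{z\mid\{z\}\circ X\subseteq Y\}$, $!X=\gamma_N(X\cap K)$, unit $\gamma_N(\{\varepsilon\})$, zero $\{\epsilon\}^{\lhd}$. For a partial subalgebra $\mathbf C$ of $\mathbf A$ (here $\mathbf C=\mathbf B^0$): $G_C$ is the sub-unital-groupoid of $(A,\cdot,1)$ generated by $C$; $U_{G_C}$ the set of unary linear polynomials over $G_C$ (maps $G_C\to G_C$ given by a groupoid term in which one variable occurs exactly once and other leaves are in $G_C$, including $\mathrm{id}$); $T_C=U_{G_C}\times C$; $x\,N_C\,(u,c)$ iff $u(x)\le^{\mathbf A}c$; $K_C$ the sub-unital-groupoid generated by $\{!^{\mathbf A}c\mid c\in C,\ !^{\mathbf A}c\in C\}$. Then $\mathbf F_{\mathbf A,\mathbf B^0}=(G_{B^0},T_{B^0},N_{B^0},K_{B^0},\epsilon)$ with $\epsilon=(\mathrm{id},0^{\mathbf A})$. *)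

(* Defs.v *)
From Stdlib Require Import List.
Import ListNotations.
Set Implicit Arguments.

Record IRLUZ := {
  car : Type;
  meet : car -> car -> car;
  join : car -> car -> car;
  mul  : car -> car -> car;
  ldiv : car -> car -> car;
  rdiv : car -> car -> car;
  one  : car;
  zero : car;
  bang : car -> car;
  meet_comm : forall x y, meet x y = meet y x;
  meet_assoc : forall x y z, meet x (meet y z) = meet (meet x y) z;
  join_comm : forall x y, join x y = join y x;
  join_assoc : forall x y z, join x (join y z) = join (join x y) z;
  meet_join_absorb : forall x y, meet x (join x y) = x;
  join_meet_absorb : forall x y, join x (meet x y) = x;
  mul_1l : forall x, mul one x = x;
  mul_1r : forall x, mul x one = x;
  (* residuation, with x <= y := meet x y = x *)
  resid_l : forall x y z, meet (mul x y) z = mul x y <-> meet y (ldiv x z) = y;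
  resid_r : forall x y z, meet (mul x y) z = mul x y <-> meet x (rdiv z y) = x;
  bang_one : meet one (bang one) = one;
  bang_mul : forall x y, meet (mul (bang x) (bang y)) (bang (mul x y)) = mul (bang x) (bang y);
  bang_deflat : forall x, meet (bang x) x = bang x;
  bang_idem : forall x, meet (bang x) (bang (bang x)) = bang x;
  bang_mono : forall x y, meet x y = x -> meet (bang x) (bang y) = bang x
}.

Definition le (A : IRLUZ) (x y : car A) : Prop := meet A x y = x.

Definition integral (A : IRLUZ) : Prop := forall x, le A x (one A).
Definition zero_bounded (A : IRLUZ) : Prop := forall x, le A (zero A) x.

Definition finite_pred (T : Type) (P : T -> Prop) : Prop :=
  exists l : list T, forall x, P x <-> In x l.

Section Frame.
Variable A : IRLUZ.
Variable B : car A -> Prop.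

Definition C0 (x : car A) : Prop := B x \/ x = zero A.

Inductive GC : car A -> Prop :=
| GC_gen : forall x, C0 x -> GC x
| GC_one : GC (one A)
| GC_mul : forall x y, GC x -> GC y -> GC (mul A x y).

(** unary linear polynomials (terms), constants in G_C checked separately *)
Inductive lpoly : Type :=
| Hole : lpoly
| PL : car A -> lpoly -> lpoly
| PR : lpoly -> car A -> lpoly.

Fixpoint lp_eval (p : lpoly) (x : car A) : car A :=
  match p with
  | Hole => x
  | PL a q => mul A a (lp_eval q x)
  | PR q a => mul A (lp_eval q x) a
  end.

Fixpoint lp_ok (p : lpoly) : Prop :=
  match p with
  | Hole => True
  | PL a q => GC a /\ lp_ok q
  | PR q a => GC a /\ lp_ok q
  end.

Definition TC (t : lpoly * car A) : Prop := lp_ok (fst t) /\ C0 (snd t).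

Definition NC (x : car A) (t : lpoly * car A) : Prop := le A (lp_eval (fst t) x) (snd t).

Definition rhd (X : car A -> Prop) (t : lpoly * car A) : Prop :=
  TC t /\ forall x, X x -> NC x t.

Definition lhd (Y : lpoly * car A -> Prop) (g : car A) : Prop :=
  GC g /\ forall t, Y t -> NC g t.

Definition closed (X : car A -> Prop) : Prop :=
  forall g, X g <-> lhd (rhd X) g.

(** the distinguished element epsilon = (id, 0^A) and the constant 0 of F^+ *)
Definition eps : lpoly * car A := (Hole, zero A).
Definition Fzero (g : car A) : Prop := lhd (fun t => t = eps) g.

Definition Fplus_finite : Prop :=
  exists L : list (car A -> Prop),
    forall X, closed X -> exists Y, In Y L /\ forall g, X g <-> Y g.

Definition Fplus_zero_bounded : Prop :=
  forall X, closed X -> forall g, Fzero g -> X g.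

End Frame.

(* Main.v *)
Require Import Defs.
From Stdlib Require Import List Arith Lia Classical ClassicalEpsilon.
Import ListNotations.

Inductive tr := L (n : nat) | N (a b : tr).
Fixpoint okt (k : nat) (t : tr) : Prop :=
  match t with L n => n < k | N a b => okt k a /\ okt k b end.
Fixpoint size (t : tr) : nat :=
  match t with L _ => 1 | N a b => S (size a + size b) end.

Inductive emb : tr -> tr -> Prop :=
| emb_L n : emb (L n) (L n)
| emb_l f t1 t2 : emb f t1 -> emb f (N t1 t2)
| emb_r f t1 t2 : emb f t2 -> emb f (N t1 t2)
| emb_N f1 f2 t1 t2 : emb f1 t1 -> emb f2 t2 -> emb (N f1 f2) (N t1 t2).

Lemma emb_refl t : emb t t.
Proof. induction t; [apply emb_L|apply emb_N; auto]. Qed.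

Lemma emb_trans a b c : emb a b -> emb b c -> emb a c.
Proof.
  intros H1 H2. revert a H1. induction H2; intros a H1.
  - exact H1.
  - apply emb_l; auto.
  - apply emb_r; auto.
  - inversion H1; subst.
    + apply emb_l; auto.
    + apply emb_r; auto.
    + apply emb_N; auto.
Qed.

Definition WQO {X} (D : X -> Prop) (R : X -> X -> Prop) :=
  forall s : nat -> X, (forall n, D (s n)) -> exists i j, i < j /\ R (s i) (s j).

Lemma pigeon k : forall s : nat -> nat, (forall n, s n < k) ->
  exists i j, i < j /\ s i = s j.
Proof.
  induction k; intros s H.
  - specialize (H 0); lia.
  - destruct (classic (exists i, s i = k)) as [[i Hi]|Hn].
    + destruct (classic (exists j, i < j /\ s j = k)) as [[j [Hij Hj]]|Hn].
      * exists i, j. split; [lia|congruence].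
      * destruct (IHk (fun n => s (S i + n))) as [a [b [Hab Hs]]].
        -- intro n. specialize (H (S i + n)).
           assert (s (S i + n) <> k) by (intro E; apply Hn; exists (S i + n); split; [lia|auto]).
           lia.
        -- exists (S i + a), (S i + b); split; [lia|auto].
    + apply IHk. intro n. specialize (H n).
      assert (s n <> k) by (intro E; apply Hn; eauto). lia.
Qed.

Lemma incr_mono (phi : nat -> nat) : (forall i, phi i < phi (S i)) ->
  forall i j, i < j -> phi i < phi j.
Proof.
  intros H i j Hij. induction j; [lia|].
  destruct (Nat.eq_dec i j) as [->|Hne]; [apply H|].
  specialize (H j). assert (i < j) by lia. specialize (IHj H0). lia.
Qed.

Lemma subseq (Q : nat -> Prop) : (forall M, exists n, M <= n /\ Q n) ->
  exists phi : nat -> nat, (forall i j, i < j -> phi i < phi j) /\ forall i, Q (phi i).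
Proof.
  intros H.
  pose (f := fun M => proj1_sig (constructive_indefinite_description _ (H M))).
  assert (Hf : forall M, M <= f M /\ Q (f M))
    by (intro M; exact (proj2_sig (constructive_indefinite_description _ (H M)))).
  exists (fix phi i := match i with 0 => f 0 | S i => f (S (phi i)) end).
  split.
  - apply incr_mono. intro i. simpl. destruct (Hf (S ((fix phi (i0 : nat) : nat :=
                match i0 with
                | 0 => f 0
                | S i1 => f (S (phi i1))
                end) i))). lia.
  - intro i; destruct i; simpl; apply Hf.
Qed.

Lemma wqo_pair {X} (D : X -> Prop) (R : X -> X -> Prop) :
  (forall x y z, R x y -> R y z -> R x z) -> WQO D R ->
  forall a b : nat -> X, (forall n, D (a n)) -> (forall n, D (b n)) ->
  exists i j, i < j /\ R (a i) (a j) /\ R (b i) (b j).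
Proof.
  intros Rt W a b Ha Hb.
  destruct (classic (forall M, exists n, M <= n /\ forall m, n < m -> ~ R (a n) (a m)))
    as [Hinf|Hfin].
  - destruct (subseq _ Hinf) as [phi [Hphi HQ]].
    destruct (W (fun i => a (phi i))) as [i [j [Hij HR]]]; [auto|].
    exfalso; apply (HQ i (phi j)); auto.
  - apply not_all_ex_not in Hfin. destruct Hfin as [M HM].
    assert (H' : forall n, exists m, M <= n -> n < m /\ R (a n) (a m)).
    { intro n. destruct (classic (M <= n)) as [Hn|Hn].
      - apply NNPP; intro C. apply HM. exists n. split; auto.
        intros m Hm HR. apply C. exists m. auto.
      - exists 0. intro; lia. }
    pose (g := fun n => proj1_sig (constructive_indefinite_description _ (H' n))).
    assert (Hg : forall n, M <= n -> n < g n /\ R (a n) (a (g n)))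
      by (intro n; exact (proj2_sig (constructive_indefinite_description _ (H' n)))).
    pose (psi := fix psi i := match i with 0 => M | S i => g (psi i) end).
    assert (HM' : forall i, M <= psi i).
    { induction i; simpl; [lia|]. destruct (Hg _ IHi); lia. }
    assert (Hs : forall i, psi i < psi (S i) /\ R (a (psi i)) (a (psi (S i)))).
    { intro i. apply (Hg _ (HM' i)). }
    assert (Hmono := incr_mono psi (fun i => proj1 (Hs i))).
    assert (HR : forall i j, i < j -> R (a (psi i)) (a (psi j))).
    { intros i j Hij. induction j; [lia|].
      destruct (Nat.eq_dec i j) as [->|Hne]; [apply Hs|].
      apply Rt with (a (psi j)); [apply IHj; lia|apply Hs]. }
    destruct (W (fun i => b (psi i))) as [i [j [Hij HRb]]]; [auto|].
    exists (psi i), (psi j). auto.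
Qed.

Lemma nat_min (P : nat -> Prop) n : P n -> exists m, P m /\ forall k, P k -> m <= k.
Proof.
  induction n as [n IH] using lt_wf_ind. intro Hn.
  destruct (classic (exists k, k < n /\ P k)) as [[k [Hk Pk]]|Hno].
  - apply (IH k Hk Pk).
  - exists n. split; auto. intros k Pk. apply NNPP; intro C. apply Hno. exists k; split; auto; lia.
Qed.

Lemma min_size (P : tr -> Prop) t : P t ->
  exists t0, P t0 /\ forall t', P t' -> size t0 <= size t'.
Proof.
  intro Ht. destruct (nat_min (fun n => exists t, P t /\ size t = n) (size t))
    as [m [[t0 [P0 S0]] Hm]]; [eauto|].
  exists t0. split; auto. intros t' Pt'. subst. apply Hm. eauto.
Qed.

Definition pickf {X} (x0 : X) (Inv : list X -> Prop) (Q : list X -> X -> Prop) l :=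
  epsilon (inhabits x0) (fun x => Q l x /\ Inv (l ++ [x])).
Fixpoint pref {X} (x0 : X) Inv Q (n : nat) : list X :=
  match n with 0 => [] | S n => pref x0 Inv Q n ++ [pickf x0 Inv Q (pref x0 Inv Q n)] end.

Lemma dc_list {X} (x0 : X) (Inv : list X -> Prop) (Q : list X -> X -> Prop) :
  Inv [] -> (forall l, Inv l -> exists x, Q l x /\ Inv (l ++ [x])) ->
  exists s : nat -> X, forall n, Q (map s (seq 0 n)) (s n) /\ Inv (map s (seq 0 (S n))).
Proof.
  intros H0 HS.
  assert (HI : forall n, Inv (pref x0 Inv Q n)).
  { induction n; simpl; auto. apply (epsilon_spec (inhabits x0) (fun x => Q _ x /\ Inv (_ ++ [x]))); auto. }
  pose (s := fun n => pickf x0 Inv Q (pref x0 Inv Q n)).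
  assert (Hp : forall n, pref x0 Inv Q n = map s (seq 0 n)).
  { induction n; [reflexivity|]. cbn [pref]. rewrite seq_S, map_app, <- IHn. reflexivity. }
  exists s. intro n. rewrite <- !Hp.
  apply (epsilon_spec (inhabits x0) (fun x => Q _ x /\ Inv (_ ++ [x]))); auto.
Qed.

Lemma nth_pref {X} (s : nat -> X) n i d : i < n -> nth i (map s (seq 0 n)) d = s i.
Proof.
  intro H. rewrite (nth_indep _ d (s 0)) by (rewrite length_map, length_seq; lia).
  rewrite map_nth, seq_nth by lia. reflexivity.
Qed.
Definition badseq (s : nat -> tr) := forall i j, i < j -> ~ emb (s i) (s j).

Lemma child_size_l a b : size a < size (N a b). Proof. simpl; lia. Qed.
Lemma child_size_r a b : size b < size (N a b). Proof. simpl; lia. Qed.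

Theorem kruskal k : WQO (okt k) emb.
Proof.
  intros s0 Hs0. apply NNPP; intro Hbad0.
  pose (agree := fun (l : list tr) (s : nat -> tr) =>
                   forall i, i < length l -> nth i l (L 0) = s i).
  pose (ext := fun l => exists s, (forall n, okt k (s n)) /\ badseq s /\ agree l s).
  destruct (dc_list (L 0) ext
     (fun l x => ext (l ++ [x]) /\ forall y, ext (l ++ [y]) -> size x <= size y))
     as [m Hm].
  - exists s0. split; [auto|split].
    + intros i j Hij He. apply Hbad0. eauto.
    + intros i Hi; simpl in Hi; lia.
  - intros l [s [Hok [Hb Ha]]].
    destruct (min_size (fun y => ext (l ++ [y])) (s (length l))) as [x [Hx Hmin]].
    + exists s. split; [auto|split; auto]. intros i Hi.
      rewrite length_app in Hi; simpl in Hi.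
      destruct (Nat.lt_ge_cases i (length l)).
      * rewrite app_nth1 by auto. apply Ha; auto.
      * rewrite app_nth2 by auto. replace i with (length l) by lia.
        rewrite Nat.sub_diag. reflexivity.
    + exists x. split; auto.
  - assert (Hext : forall n, exists s, (forall n, okt k (s n)) /\ badseq s /\
                      forall i, i <= n -> s i = m i).
    { intro n. destruct (proj2 (Hm n)) as [s [Hok [Hb Ha]]]. exists s.
      split; auto; split; auto. intros i Hi. rewrite <- Ha.
      - apply nth_pref; lia.
      - rewrite length_map, length_seq; lia. }
    assert (m_ok : forall n, okt k (m n)).
    { intro n. destruct (Hext n) as [s [Hok [_ Ha]]]. rewrite <- Ha; auto. }
    assert (m_bad : badseq m).
    { intros i j Hij. destruct (Hext j) as [s [_ [Hb Ha]]].
      rewrite <- (Ha i), <- (Ha j) by lia. auto. }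
    assert (m_min : forall n s, (forall n, okt k (s n)) -> badseq s ->
                     (forall i, i < n -> s i = m i) -> size (m n) <= size (s n)).
    { intros n s Hok Hb Ha. apply (proj2 (proj1 (Hm n))).
      exists s. split; auto; split; auto. intros i Hi.
      rewrite length_app, length_map, length_seq in Hi; simpl in Hi.
      destruct (Nat.lt_ge_cases i n).
      - rewrite app_nth1 by (rewrite length_map, length_seq; auto).
        rewrite nth_pref by auto. symmetry; auto.
      - rewrite app_nth2 by (rewrite length_map, length_seq; auto).
        rewrite length_map, length_seq. replace i with n by lia.
        rewrite Nat.sub_diag. reflexivity. }
    pose (child := fun t u => (exists v, u = N t v) \/ (exists v, u = N v t)).
    assert (Hchild : forall t u, child t u -> emb t u /\ size t < size u /\
                                   (okt k u -> okt k t)).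
    { intros t u [[v ->]|[v ->]]; simpl; (split; [|split; [lia|tauto]]).
      - apply emb_l, emb_refl.
      - apply emb_r, emb_refl. }
    assert (WD : WQO (fun t => exists i, child t (m i)) emb).
    { intros c Hc. apply NNPP; intro Hcb.
      assert (Hcbad : badseq c) by (intros i j Hij He; apply Hcb; eauto).
      pose (phi := fun j => proj1_sig (constructive_indefinite_description _ (Hc j))).
      assert (Hphi : forall j, child (c j) (m (phi j)))
        by (intro j; exact (proj2_sig (constructive_indefinite_description _ (Hc j)))).
      destruct (nat_min (fun i => exists j, phi j = i) (phi 0)) as [i0 [[j0 Hj0] Hmin]];
        [eauto|].
      pose (s := fun x => if x <? i0 then m x else c (j0 + (x - i0))).
      assert (Hs1 : forall x, x < i0 -> s x = m x).
      { intros x Hx. unfold s. destruct (Nat.ltb_spec x i0); [auto|lia]. }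
      assert (Hs2 : forall x, i0 <= x -> s x = c (j0 + (x - i0))).
      { intros x Hx. unfold s. destruct (Nat.ltb_spec x i0); [lia|auto]. }
      assert (Hle : size (m i0) <= size (s i0)).
      { apply m_min; auto.
        - intro x. destruct (Nat.lt_ge_cases x i0).
          + rewrite Hs1; auto.
          + rewrite Hs2 by auto. apply (Hchild _ _ (Hphi _)), m_ok.
        - intros x y Hxy He.
          destruct (Nat.lt_ge_cases y i0).
          + rewrite !Hs1 in He by lia. apply (m_bad x y); auto.
          + rewrite (Hs2 y) in He by auto.
            destruct (Nat.lt_ge_cases x i0).
            * rewrite Hs1 in He by auto.
              set (j := j0 + (y - i0)) in *.
              assert (i0 <= phi j) by (apply Hmin; eauto).
              apply (m_bad x (phi j)); [lia|].
              apply emb_trans with (c j); auto. apply (Hchild _ _ (Hphi j)).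
            * rewrite Hs2 in He by auto. apply (Hcbad (j0 + (x - i0)) (j0 + (y - i0))); auto; lia. }
      rewrite Hs2 in Hle by lia. replace (j0 + (i0 - i0)) with j0 in Hle by lia.
      subst i0. destruct (Hchild _ _ (Hphi j0)) as [_ [Hsz _]]. lia. }
    destruct (classic (forall M, exists n, M <= n /\ exists l, m n = L l)) as [Hinf|Hfin].
    + destruct (subseq _ Hinf) as [phi [Hphi HQ]].
      pose (lab := fun i => match m (phi i) with L l => l | _ => 0 end).
      destruct (pigeon k lab) as [i [j [Hij Hl]]].
      * intro n. unfold lab. destruct (HQ n) as [l Hl]. rewrite Hl.
        specialize (m_ok (phi n)). rewrite Hl in m_ok. exact m_ok.
      * apply (m_bad (phi i) (phi j)); [auto|].
        unfold lab in Hl. destruct (HQ i) as [li Hi]. destruct (HQ j) as [lj Hj].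
        rewrite Hi, Hj in *. subst. apply emb_refl.
    + apply not_all_ex_not in Hfin. destruct Hfin as [M HM].
      assert (Hnode : forall n, M <= n -> exists a b, m n = N a b).
      { intros n Hn. destruct (m n) as [l|a b] eqn:E; eauto.
        exfalso. apply HM. exists n. eauto. }
      pose (lft := fun t => match t with N a _ => a | _ => t end).
      pose (rgt := fun t => match t with N _ b => b | _ => t end).
      destruct (wqo_pair _ _ emb_trans WD (fun i => lft (m (M + i))) (fun i => rgt (m (M + i))))
        as [i [j [Hij [H1 H2]]]].
      * intro n. exists (M + n). destruct (Hnode (M + n)) as [a [b E]]; [lia|].
        rewrite E. left. simpl. eauto.
      * intro n. exists (M + n). destruct (Hnode (M + n)) as [a [b E]]; [lia|].
        rewrite E. right. simpl. eauto.
      * apply (m_bad (M + i) (M + j)); [lia|].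
        destruct (Hnode (M + i)) as [a [b Ei]]; [lia|].
        destruct (Hnode (M + j)) as [a' [b' Ej]]; [lia|].
        simpl in H1, H2. rewrite Ei, Ej in *. simpl in *. apply emb_N; auto.
Qed.

Lemma fin_basis k (P : tr -> Prop) : (forall t, P t -> okt k t) ->
  exists F : list tr, (forall f, In f F -> P f) /\ forall t, P t -> exists f, In f F /\ emb f t.
Proof.
  intros HP. apply NNPP; intro H.
  destruct (dc_list (L 0) (fun l => forall x, In x l -> P x)
              (fun l x => P x /\ forall f, In f l -> ~ emb f x)) as [s Hs].
  - intros x [].
  - intros l Hl. assert (~ forall t, P t -> exists f, In f l /\ emb f t)
      by (intro C; apply H; eauto).
    apply not_all_ex_not in H0. destruct H0 as [t Ht].
    exists t. split.
    + split. * apply NNPP; intro C; apply Ht; intro; contradiction.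
      * intros f Hf He. apply Ht. intros _. eauto.
    + intros x Hx. apply in_app_or in Hx. destruct Hx as [Hx|[<-|[]]]; auto.
      apply NNPP; intro C; apply Ht; intro; contradiction.
  - destruct (kruskal k s) as [i [j [Hij He]]].
    + intro n. apply HP. apply (proj1 (Hs n)).
    + apply (proj2 (proj1 (Hs j)) (s i)); auto.
      apply in_map, in_seq. lia.
Qed.
Section Alg.
End Alg.

Lemma le_refl (A : IRLUZ) x : le A x x.
Proof.
  unfold le. pose proof (join_meet_absorb A x x) as H1.
  pose proof (meet_join_absorb A x (meet A x x)) as H2. rewrite H1 in H2. exact H2.
Qed.

Lemma le_trans (A : IRLUZ) x y z : le A x y -> le A y z -> le A x z.
Proof.
  unfold le; intros H1 H2. rewrite <- H1 at 1. rewrite <- meet_assoc, H2. exact H1.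
Qed.

Lemma mul_mono_r (A : IRLUZ) x y z : le A x y -> le A (mul A z x) (mul A z y).
Proof.
  intro H. unfold le. apply resid_l.
  assert (H1 : le A y (ldiv A z (mul A z y))) by (apply resid_l, le_refl).
  apply (le_trans A _ _ _ H H1).
Qed.

Lemma mul_mono_l (A : IRLUZ) x y z : le A x y -> le A (mul A x z) (mul A y z).
Proof.
  intro H. unfold le. apply resid_r.
  assert (H1 : le A y (rdiv A (mul A y z) z)) by (apply resid_r, le_refl).
  apply (le_trans A _ _ _ H H1).
Qed.

Lemma int_l (A : IRLUZ) x y : integral A -> le A (mul A x y) x.
Proof. intro HI. rewrite <- (mul_1r A x) at 2. apply mul_mono_r, HI. Qed.
Lemma int_r (A : IRLUZ) x y : integral A -> le A (mul A x y) y.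
Proof. intro HI. rewrite <- (mul_1l A y) at 2. apply mul_mono_l, HI. Qed.

Lemma lp_below (A : IRLUZ) (p : lpoly A) x : integral A -> le A (lp_eval p x) x.
Proof.
  intro HI. induction p; simpl.
  - apply le_refl.
  - eapply le_trans; [apply int_r; auto|auto].
  - eapply le_trans; [apply int_l; auto|auto].
Qed.

Fixpoint val (A : IRLUZ) (al : list (car A)) (t : tr) : car A :=
  match t with L n => nth n al (one A) | N a b => mul A (val A al a) (val A al b) end.

Lemma emb_val (A : IRLUZ) al f t : integral A -> emb f t -> le A (val A al t) (val A al f).
Proof.
  intros HI H. induction H; simpl.
  - apply le_refl.
  - eapply le_trans; [apply int_l; auto|auto].
  - eapply le_trans; [apply int_r; auto|auto].
  - eapply le_trans; [apply mul_mono_l; eauto|apply mul_mono_r; auto].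
Qed.

Inductive ctx := Hh | CL (t : tr) (c : ctx) | CR (c : ctx) (t : tr).
Fixpoint plug (c : ctx) (x : tr) : tr :=
  match c with Hh => x | CL t c => N t (plug c x) | CR c t => N (plug c x) t end.

Fixpoint subs (t : tr) : list tr :=
  t :: match t with L _ => [] | N a b => subs a ++ subs b end.

Lemma subs_self t : In t (subs t). Proof. destruct t; simpl; auto. Qed.

Lemma subs_closed t a b : In (N a b) (subs t) -> In a (subs t) /\ In b (subs t).
Proof.
  induction t; simpl; intros H.
  - destruct H as [H|[]]; discriminate.
  - destruct H as [H|H].
    + inversion H; subst. split; right; apply in_or_app; [left|right]; apply subs_self.
    + apply in_app_or in H. destruct H as [H|H].
      * destruct (IHt1 H). split; right; apply in_or_app; auto.
      * destruct (IHt2 H). split; right; apply in_or_app; auto.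
Qed.

Lemma emb_N_inv f t1 t2 : emb f (N t1 t2) <->
  emb f t1 \/ emb f t2 \/ exists f1 f2, f = N f1 f2 /\ emb f1 t1 /\ emb f2 t2.
Proof.
  split.
  - intro H; inversion H; subst; eauto 10.
  - intros [H|[H|[f1 [f2 [-> [H1 H2]]]]]]; [apply emb_l|apply emb_r|apply emb_N]; auto.
Qed.

Lemma ctx_congr (S : list tr) : (forall a b, In (N a b) S -> In a S /\ In b S) ->
  forall x y, (forall h, In h S -> (emb h x <-> emb h y)) ->
  forall c h, In h S -> (emb h (plug c x) <-> emb h (plug c y)).
Proof.
  intros HS x y Hxy c. induction c; intros h Hh; simpl; auto.
  - rewrite !emb_N_inv. rewrite (IHc h Hh). split; intros [H|[H|[f1 [f2 [-> [H1 H2]]]]]]; auto;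
    right; right; exists f1, f2; repeat split; auto; apply (IHc f2); auto; apply (HS f1 f2 Hh).
  - rewrite !emb_N_inv. rewrite (IHc h Hh). split; intros [H|[H|[f1 [f2 [-> [H1 H2]]]]]]; auto;
    right; right; exists f1, f2; repeat split; auto; apply (IHc f1); auto; apply (HS f1 f2 Hh).
Qed.

Fixpoint pw {T} (l : list T) : list (list T) :=
  match l with [] => [[]] | a :: l => pw l ++ map (cons a) (pw l) end.

Lemma pw_spec {T} (l : list T) (Q : T -> Prop) :
  exists S, In S (pw l) /\ forall x, In x S <-> In x l /\ Q x.
Proof.
  induction l as [|a l IH]; simpl.
  - exists []. split; auto. simpl; tauto.
  - destruct IH as [S [HS HSx]]. destruct (classic (Q a)) as [Qa|nQa].
    + exists (a :: S). split. * apply in_or_app; right; apply in_map; auto.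
      * intro x; simpl; rewrite HSx. split; [intros [<-|H]; tauto|].
        intros [[<-|H] Hq]; auto.
    + exists S. split. * apply in_or_app; auto.
      * intro x; rewrite HSx. split; [tauto|]. intros [[<-|H] Hq]; tauto.
Qed.

Lemma reps {X H : Type} (D : X -> Prop) (tau : X -> H -> Prop) (hs : list H) :
  exists R, (forall r, In r R -> D r) /\
    forall g, D g -> exists r, In r R /\ forall h, In h hs -> (tau g h <-> tau r h).
Proof.
  revert D. induction hs as [|h hs IH]; intro D.
  - destruct (classic (exists g, D g)) as [[g Dg]|Hn].
    + exists [g]. split; [intros r [<-|[]]; auto|]. intros g' _. exists g. split; simpl; tauto.
    + exists []. split; [intros r []|]. intros g Dg; exfalso; eauto.
  - destruct (IH (fun g => D g /\ tau g h)) as [R1 [HR1 H1]].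
    destruct (IH (fun g => D g /\ ~ tau g h)) as [R2 [HR2 H2]].
    exists (R1 ++ R2). split.
    + intros r Hr; apply in_app_or in Hr; destruct Hr as [Hr|Hr]; [apply HR1|apply HR2]; auto.
    + intros g Dg. destruct (classic (tau g h)) as [T|T].
      * destruct (H1 g (conj Dg T)) as [r [Hr Hag]]. exists r. split; [apply in_or_app; auto|].
        intros h' [<-|Hh']; auto. split; intros _; [apply HR1|]; auto.
      * destruct (H2 g (conj Dg T)) as [r [Hr Hag]]. exists r. split; [apply in_or_app; auto|].
        intros h' [<-|Hh']; auto. split; intro C; [contradiction|]. exfalso; apply (HR2 r); auto.
Qed.
Lemma gc_tree (A : IRLUZ) (B : car A -> Prop) lB g :
  (forall x, B x <-> In x lB) -> GC A B g ->
  exists t, okt (length (zero A :: one A :: lB)) t /\ val A (zero A :: one A :: lB) t = g.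
Proof.
  intros HB H. induction H.
  - destruct H as [H|H].
    + apply HB in H. destruct (In_nth _ _ (one A) (or_intror (or_intror H) : In x (zero A :: one A :: lB)))
        as [n [Hn Hx]]. exists (L n). auto.
    + exists (L 0). simpl. split; [lia|auto].
  - exists (L 1). simpl. split; [lia|auto].
  - destruct IHGC1 as [a [Ha Va]], IHGC2 as [b [Hb Vb]]. exists (N a b). simpl.
    split; auto. congruence.
Qed.

Lemma ctx_of (A : IRLUZ) (B : car A -> Prop) lB (p : lpoly A) :
  (forall x, B x <-> In x lB) -> lp_ok B p ->
  exists c, (forall x, val A (zero A :: one A :: lB) (plug c x) =
                    lp_eval p (val A (zero A :: one A :: lB) x)) /\
            (forall x, okt (length (zero A :: one A :: lB)) x ->
                       okt (length (zero A :: one A :: lB)) (plug c x)).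
Proof.
  intros HB. induction p as [|a p IH|p IH a]; simpl.
  - intros _. exists Hh. simpl. auto.
  - intros [Ha Hp]. destruct (IH Hp) as [c [Hc1 Hc2]].
    destruct (gc_tree A B lB a HB Ha) as [ta [Hta Vta]].
    exists (CL ta c). simpl. split; [intro x; rewrite Hc1, Vta; auto|auto].
  - intros [Ha Hp]. destruct (IH Hp) as [c [Hc1 Hc2]].
    destruct (gc_tree A B lB a HB Ha) as [ta [Hta Vta]].
    exists (CR c ta). simpl. split; [intro x; rewrite Hc1, Vta; auto|auto].
Qed.

Theorem mainTheorem7 (A : IRLUZ) (B : car A -> Prop) :
  integral A ->
  finite_pred B ->
  Fplus_finite A B /\ (zero_bounded A -> Fplus_zero_bounded A B).
Proof.
  intros HI [lB HB]. split.
  2:{ intros HZ X HX g [Hg Hz]. apply HX. split; auto.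
      intros [p c] [[Hp Hc] _]. unfold NC; simpl.
      specialize (Hz (eps A) eq_refl). unfold NC, eps in Hz; simpl in Hz.
      eapply le_trans; [apply lp_below; auto|]. eapply le_trans; [apply Hz|apply HZ]. }
  set (al := zero A :: one A :: lB). set (k := length al).
  assert (HG : forall tl : list (car A), exists G : list (car A * tr),
             (forall c f, In (c, f) G -> le A (val A al f) c) /\
             (forall c, In c tl -> forall t, okt k t -> le A (val A al t) c ->
                         exists f, In (c, f) G /\ emb f t)).
  { induction tl as [|c tl [G' [HG1 HG2]]].
    - exists []. split; [intros c f []|intros c []].
    - destruct (fin_basis k (fun t => okt k t /\ le A (val A al t) c)) as [F [HF1 HF2]];
        [tauto|].
      exists (map (pair c) F ++ G'). split.
      + intros c' f Hf. apply in_app_or in Hf. destruct Hf as [Hf|Hf]; auto.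
        apply in_map_iff in Hf. destruct Hf as [f' [E Hf']]. inversion E; subst.
        apply HF1; auto.
      + intros c' [<-|Hc'] t Ht Hle.
        * destruct (HF2 t (conj Ht Hle)) as [f [Hf He]]. exists f. split; auto.
          apply in_or_app; left; apply in_map; auto.
        * destruct (HG2 c' Hc' t Ht Hle) as [f [Hf He]]. exists f. split; auto.
          apply in_or_app; auto. }
  destruct (HG (zero A :: lB)) as [G [HG1 HG2]]. clear HG.
  set (SubL := flat_map (fun p => subs (snd p)) G).
  assert (HSc : forall a b, In (N a b) SubL -> In a SubL /\ In b SubL).
  { intros a b H. apply in_flat_map in H. destruct H as [p [Hp H]].
    destruct (subs_closed _ _ _ H). split; apply in_flat_map; eauto. }
  set (rep := fun g => epsilon (inhabits (L 0)) (fun t => okt k t /\ val A al t = g)).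
  assert (Hrep : forall g, GC A B g -> okt k (rep g) /\ val A al (rep g) = g).
  { intros g Hg. apply (epsilon_spec (inhabits (L 0)) (fun t => okt k t /\ val A al t = g)).
    apply (gc_tree A B lB g HB Hg). }
  set (eqv := fun g g' => forall h, In h SubL -> (emb h (rep g) <-> emb h (rep g'))).
  assert (HNC : forall g g', GC A B g -> GC A B g' -> eqv g g' ->
              forall t, TC B t -> NC g t -> NC g' t).
  { intros g g' Hg Hg' He [p c] [Hp Hc] Hn. unfold NC in *; simpl in *.
    destruct (ctx_of A B lB p HB Hp) as [cx [Hcx1 Hcx2]].
    destruct (Hrep g Hg) as [Ok1 V1]. destruct (Hrep g' Hg') as [Ok2 V2].
    assert (Hc' : In c (zero A :: lB)).
    { destruct Hc as [Hc|Hc]; [right; apply HB; auto|left; auto]. }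
    rewrite <- V1, <- Hcx1 in Hn. rewrite <- V2, <- Hcx1.
    destruct (HG2 c Hc' _ (Hcx2 _ Ok1) Hn) as [f [Hf Hemb]].
    assert (HfS : In f SubL).
    { apply in_flat_map. exists (c, f). split; auto. apply subs_self. }
    apply (ctx_congr SubL HSc (rep g) (rep g') He cx f HfS) in Hemb.
    eapply le_trans; [apply emb_val; eauto|]. apply (HG1 c f Hf). }
  assert (Htr : forall X, closed A B X -> forall g g', GC A B g -> GC A B g' -> eqv g g' ->
                  X g -> X g').
  { intros X HX g g' Hg Hg' He Xg. apply HX. apply HX in Xg. destruct Xg as [_ Xg].
    split; auto. intros t Ht. apply (HNC g g'); auto. apply Ht. }
  destruct (reps (GC A B) (fun g h => emb h (rep g)) SubL) as [R [HR1 HR2]].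
  exists (map (fun S g => GC A B g /\ exists r, In r S /\ eqv g r) (pw R)).
  intros X HX.
  destruct (pw_spec R X) as [S [HS HSx]].
  exists (fun g => GC A B g /\ exists r, In r S /\ eqv g r). split.
  - exact (in_map (fun (S : list (car A)) (g : car A) => GC A B g /\ exists r, In r S /\ eqv g r) _ _ HS).
  - intro g. split.
    + intro Xg. assert (Hg : GC A B g) by (apply HX in Xg; apply Xg).
      split; auto. destruct (HR2 g Hg) as [r [Hr Hag]]. exists r. split; auto.
      apply HSx. split; auto. apply (Htr X HX g r); auto.
    + intros [Hg [r [Hr Hag]]]. apply HSx in Hr. destruct Hr as [Hr Xr].
      apply (Htr X HX r g); auto. intros h Hh. symmetry. apply Hag; auto.
Qed.
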